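(* Let $C\subseteq 2^X$ be a maximum class of VC-dimension $d$ and let $D\subseteq C$ be a maximum class (on the same domain $X$) of VC-dimension $d-1$. Then each $c\in C\setminus D$ is the source of a unique incomplete cube for $(C,D)$. Moreover, if $r':D\to X(D)$ is a representation map for $D$ and $r:C\to X(C)$ extends $r'$ by setting $r(c)=\mathrm{supp}(s^{-1}(c))$ for each $c\in C\setminus D$ (where $s^{-1}(c)$ is the unique incomplete cube with source $c$), then $r$ is a representation map for $C$.
   Context: $X$ is a finite set, $n=|X|$; concepts $c\subseteq X$ are identified with characteristic functions, $c|Y$ is the restriction to $Y$ and $C|Y=\{c|Y:c\in C\}$. $Y$ is shattered by $C$ if $C|Y=2^Y$; VC-dimension is the maximum size of a shattered set; $C$ is maximum if $|C|=\sum_{i=0}^d\binom{n}{i}$ with $d$ its VC-dimension. $X(C)$ is the family of sets shattered by $C$. A cube of $2^X$ is $\{T\cup Z:Z\subseteq Y\}$ with $Y\subseteq X$, $T\subseteq X\setminus Y$, support $\mathrm{supp}=Y$; a cube of $C$ is a cube contained in $C$. A missed simplex for $(C,D)$ is a set $\sigma\in X(C)\setminus X(D)$ (it has size $d$). An incomplete cube for $(C,D)$ is a cube $Q$ of $C$ whose support is a missed simplex; its source $s(Q)$ is the unique $c\in Q$ with $c|\mathrm{supp}(Q)\notin D|\mathrm{supp}(Q)$. A representation map for a class $E$ with $|E|=|X(E)|$ is a bijection $r:E\to X(E)$ with $c|(r(c)\cup r(c'))\ne c'|(r(c)\cup r(c'))$ for all distinct $c,c'\in E$. *)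

(* Defs.v *)
From mathcomp Require Import all_boot.
Set Implicit Arguments. Unset Strict Implicit. Unset Printing Implicit Defensive.

Section VC.
Variable X : finType.

Definition restr (C : {set {set X}}) (Y : {set X}) : {set {set X}} :=
  [set c :&: Y | c in C].

Definition shatters (C : {set {set X}}) (Y : {set X}) : bool :=
  restr C Y == powerset Y.

Definition shattered_family (C : {set {set X}}) : {set {set X}} :=
  [set Y | shatters C Y].

Definition vcdim (C : {set {set X}}) (d : nat) : Prop :=
  (exists Y, shatters C Y /\ #|Y| = d) /\
  (forall Y, shatters C Y -> #|Y| <= d).

Definition maximum (C : {set {set X}}) (d : nat) : Prop :=
  vcdim C d /\ #|C| = \sum_(i < d.+1) 'C(#|X|, i).

Definition is_cube (Q : {set {set X}}) (Y : {set X}) : Prop :=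
  exists T : {set X}, [disjoint T & Y] /\ Q = [set T :|: Z | Z in powerset Y].

Definition incomplete_cube (C D Q : {set {set X}}) (Y : {set X}) : Prop :=
  [/\ is_cube Q Y, Q \subset C & Y \in shattered_family C :\: shattered_family D].

Definition is_source (D Q : {set {set X}}) (Y : {set X}) (c : {set X}) : Prop :=
  [/\ c \in Q, c :&: Y \notin restr D Y &
      forall c', c' \in Q -> c' :&: Y \notin restr D Y -> c' = c].

Definition repr_map (E : {set {set X}}) (r : {set X} -> {set X}) : Prop :=
  [/\ {in E, forall c, r c \in shattered_family E},
      {in E &, injective r},
      (forall Y, Y \in shattered_family E -> exists2 c, c \in E & r c = Y) &
      {in E &, forall c c', c != c' ->
         c :&: (r c :|: r c') != c' :&: (r c :|: r c')}].

End VC.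

(* Main.v *)
Require Import Defs.
From mathcomp Require Import all_boot zify.
From Stdlib Require Import Classical_Prop.
Set Implicit Arguments. Unset Strict Implicit. Unset Printing Implicit Defensive.

Definition Psi j m := \sum_(i < j) 'C(m, i).

Lemma Psi0 m : Psi 0 m = 0.
Proof. by rewrite /Psi big_ord0. Qed.

Lemma Psi_rec j m : Psi j.+1 m = Psi j m + 'C(m, j).
Proof. by rewrite /Psi big_ord_recr. Qed.

Lemma PsiS k m : Psi k.+1 m.+1 = Psi k.+1 m + Psi k m.
Proof.
elim: k => [|k IH]; first by rewrite !Psi_rec !Psi0 !bin0.
by rewrite Psi_rec IH binS !Psi_rec; lia.
Qed.

Lemma Psi_full0 m k : Psi (m.+1 + k) m = 2 ^ m.
Proof.
elim: k => [|k IH].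
  rewrite addn0 /Psi -[2]/(1 + 1) expnDn; apply: eq_bigr => i _.
  by rewrite !exp1n !muln1.
by rewrite addnS Psi_rec IH bin_small ?addn0 // ltnS leq_addr.
Qed.

Lemma Psi_full j m : m < j -> Psi j m = 2 ^ m.
Proof. by move=> h; rewrite -(subnKC h) Psi_full0. Qed.

Lemma Psi_nn j : (Psi j j).+1 = 2 ^ j.
Proof. by rewrite -(Psi_full0 j 0) addn0 Psi_rec binn addn1. Qed.

Lemma Psi_pos k m : 0 < Psi k.+1 m.
Proof. by rewrite /Psi big_ord_recl bin0. Qed.

Section Work.
Variable X : finType.
Implicit Types (S Y Z W T c u : {set X}) (C D : {set {set X}}).

Definition maxi S j C :=
  [/\ C \subset powerset S, (forall Y, shatters C Y -> #|Y| < j) & #|C| = Psi j #|S|].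
Definition Cm C (x : X) := [set c :\ x | c in C].
Definition Cr C (x : X) := [set c in C | (x \notin c) && (x |: c \in C)].

Lemma setD1_id c x : x \notin c -> c :\ x = c.
Proof.
move=> h; apply/setP=> y; rewrite !inE; case: eqP => // ->.
by rewrite (negbTE h).
Qed.

Lemma card_decomp C x : #|C| = #|Cm C x| + #|Cr C x|.
Proof.
set P := [set c : {set X} | x \in c].
set C1 := C :&: P; set C0 := C :\: P.
have eC : #|C| = #|C0| + #|C1| by rewrite addnC cardsID.
have eM : Cm C x = C0 :|: [set c :\ x | c in C1].
  apply/setP=> u; apply/imsetP/idP.
    case=> c cC ->.
    case xc: (x \in c).
      by rewrite !inE; apply/orP; right; apply: imset_f; rewrite !inE cC xc.
    by rewrite setD1_id ?xc // !inE cC xc.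
  rewrite !inE; case/orP.
    by case/andP=> xu uC; exists u => //; rewrite setD1_id.
  by case/imsetP=> c; rewrite !inE => /andP [cC _] ->; exists c.
have eR : Cr C x = C0 :&: [set c :\ x | c in C1].
  apply/setP=> u; rewrite !inE; apply/andP/andP.
    case=> uC /andP [xu xuC]; split; first by rewrite xu.
    by apply/imsetP; exists (x |: u); rewrite ?setU1K // !inE xuC eqxx.
  case=> /andP [xu uC] /imsetP [c]; rewrite !inE => /andP [cC xc] eu; subst u.
  split=> //; apply/andP; split; [by rewrite !inE eqxx | by rewrite setD1K].
have e1 : #|[set c :\ x | c in C1]| = #|C1|.
  apply: card_in_imset => c1 c2; rewrite !inE => /andP [_ h1] /andP [_ h2] e.
  by rewrite -(setD1K h1) e setD1K.
rewrite eM eR cardsUI e1; exact: eC.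
Qed.

Lemma restr_sub C Y : restr C Y \subset powerset Y.
Proof. by apply/subsetP=> u /imsetP [c _ ->]; rewrite powersetE subsetIr. Qed.

Lemma shattersP C Y : shatters C Y = (powerset Y \subset restr C Y).
Proof. by rewrite /shatters eqEsubset restr_sub. Qed.

Lemma shatters_notin C x Y :
  (forall c, c \in C -> x \notin c) -> shatters C Y -> x \notin Y.
Proof.
move=> hC; rewrite shattersP => /subsetP /(_ Y); rewrite powersetE subxx.
move=> /(_ isT) /imsetP [c cC eY]; apply/negP => xY.
by move: xY; rewrite eY inE (negbTE (hC c cC)).
Qed.

Lemma restr_Cm C x Y : x \notin Y -> restr (Cm C x) Y = restr C Y.
Proof.
move=> h; rewrite /restr /Cm -imset_comp; apply: eq_imset => c /=.
apply/setP => y; rewrite !inE; case: eqP => // ->.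
by rewrite (negbTE h) !andbF.
Qed.

Lemma sh_Cm C x Y : shatters (Cm C x) Y -> shatters C Y.
Proof.
move=> h; have xY : x \notin Y.
  apply: shatters_notin h => c /imsetP [c' _ ->]; by rewrite !inE eqxx.
by move: h; rewrite /shatters restr_Cm.
Qed.

Lemma sh_Cr C x Y : shatters (Cr C x) Y -> x \notin Y /\ shatters C (x |: Y).
Proof.
move=> h; have xY : x \notin Y.
  by apply: shatters_notin h => c; rewrite inE => /andP [_ /andP []].
split=> //; rewrite shattersP; apply/subsetP => P; rewrite powersetE => PY.
have : P :\ x \in restr (Cr C x) Y.
  move: h; rewrite shattersP => /subsetP; apply; rewrite powersetE.
  apply/subsetP=> y; rewrite !inE => /andP [yx yP].
  by move/subsetP: PY => /(_ y yP); rewrite !inE (negbTE yx).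
case/imsetP=> c; rewrite inE => /andP [cC /andP [xc xcC]] e.
case xP: (x \in P).
  apply/imsetP; exists (x |: c) => //.
  by rewrite -setUIr -e setD1K.
apply/imsetP; exists c => //.
rewrite -(setD1_id (negbT xP)) e; apply/setP=> y; rewrite !inE.
by case: eqP => // ->; rewrite (negbTE xc).
Qed.

Lemma Cm_sub S C x : C \subset powerset S -> Cm C x \subset powerset (S :\ x).
Proof.
move=> /subsetP h; apply/subsetP=> u /imsetP [c cC ->].
by rewrite powersetE; apply: setSD; rewrite -powersetE h.
Qed.

Lemma Cr_sub S C x : C \subset powerset S -> Cr C x \subset powerset (S :\ x).
Proof.
move=> /subsetP h; apply/subsetP=> u; rewrite inE => /andP [uC /andP [xu _]].
by rewrite powersetE subsetD1 xu andbT -powersetE h.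
Qed.

Lemma dim0 C : (forall Y, shatters C Y -> #|Y| < 0) -> C = set0.
Proof.
move=> h; apply/eqP; apply/negPn/negP => /set0Pn [c cC].
have : shatters C set0.
  rewrite shattersP; apply/subsetP=> u; rewrite powersetE subset0 => /eqP ->.
  by apply/imsetP; exists c => //; rewrite setI0.
by move/h.
Qed.

Lemma sauer n : forall S j C, #|S| = n -> C \subset powerset S ->
  (forall Y, shatters C Y -> #|Y| < j) -> #|C| <= Psi j #|S|.
Proof.
elim: n => [|n IH] S [|k] C hS hC hsh; try by rewrite (dim0 hsh) cards0.
  rewrite hS Psi_full // (leq_trans (subset_leq_card hC)) //.
  by rewrite card_powerset hS.
have : 0 < #|S| by rewrite hS.
case/card_gt0P => x xS.
have hS' : #|S :\ x| = n by move: hS; rewrite (cardsD1 x) xS add1n => [[]].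
rewrite (card_decomp C x) hS PsiS -hS'; apply: leq_add.
  apply: IH => //; first exact: Cm_sub.
  by move=> Y /sh_Cm; apply: hsh.
apply: IH => //; first exact: Cr_sub.
move=> Y /sh_Cr [xY /hsh]; by rewrite cardsU1 xY.
Qed.

Lemma maxi_sub S j C : maxi S j C -> C \subset powerset S.
Proof. by case. Qed.

Lemma maxi_CmCr S k C x : maxi S k.+1 C -> x \in S ->
  maxi (S :\ x) k.+1 (Cm C x) /\ maxi (S :\ x) k (Cr C x).
Proof.
case=> hC hsh hcard xS.
have hS : #|S| = (#|S :\ x|).+1 by rewrite (cardsD1 x) xS.
have h1 : #|Cm C x| <= Psi k.+1 #|S :\ x|.
  apply: (sauer erefl); first exact: Cm_sub.
  by move=> Y /sh_Cm; apply: hsh.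
have h2 : #|Cr C x| <= Psi k #|S :\ x|.
  apply: (sauer erefl); first exact: Cr_sub.
  move=> Y /sh_Cr [xY /hsh]; by rewrite cardsU1 xY.
move: hcard; rewrite (card_decomp C x) hS PsiS => e.
split; split.
- exact: Cm_sub.
- by move=> Y /sh_Cm; apply: hsh.
- by apply/eqP; rewrite eqn_leq h1 -(leq_add2r #|Cr C x|) e leq_add2l.
- exact: Cr_sub.
- move=> Y /sh_Cr [xY /hsh]; by rewrite cardsU1 xY.
- by apply/eqP; rewrite eqn_leq h2 -(leq_add2l #|Cm C x|) e leq_add2r.
Qed.

Lemma maxi_Cm S j C x : maxi S j C -> x \in S -> maxi (S :\ x) j (Cm C x).
Proof.
case: j => [|k]; last by move=> h xS; case: (maxi_CmCr h xS).
case=> hC hsh hc xS.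
have C0 : C = set0 by apply: dim0.
have -> : Cm C x = set0 by rewrite /Cm C0 imset0.
split; rewrite ?sub0set ?cards0 ?Psi0 //.
move=> Y; rewrite /shatters /restr imset0 eq_sym => /eqP/setP/(_ set0).
by rewrite !inE sub0set.
Qed.

Lemma maxi_Cr S k C x : maxi S k.+1 C -> x \in S -> maxi (S :\ x) k (Cr C x).
Proof. by move=> h xS; case: (maxi_CmCr h xS). Qed.

End Work.

Section Work2.
Variable X : finType.
Implicit Types (S Y Z W T c u : {set X}) (C D : {set {set X}}).

Lemma restr_self S C : C \subset powerset S -> restr C S = C.
Proof.
move=> /subsetP h; apply/setP=> u; apply/imsetP/idP.
  case=> c cC ->; move: (h c cC); rewrite powersetE => /setIidPl ->; done.
move=> uC; exists u => //; move: (h u uC); rewrite powersetE => /setIidPl ->.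
done.
Qed.

Lemma restr_restr C W Y : Y \subset W -> restr (restr C W) Y = restr C Y.
Proof.
move=> h; rewrite /restr -imset_comp; apply: eq_imset => c /=.
by rewrite -setIA (setIidPr h).
Qed.

Lemma maxi_restr n : forall S W j C, #|S :\: W| = n -> W \subset S ->
  maxi S j C -> maxi W j (restr C W).
Proof.
elim: n => [|n IH] S W j C hn hWS hC.
  have eSW : S = W.
    apply/eqP; rewrite eqEsubset hWS andbT.
    by move/cards0_eq: hn => /eqP; rewrite setD_eq0.
  by subst W; rewrite restr_self //; case: hC.
have : 0 < #|S :\: W| by rewrite hn.
case/card_gt0P => x; rewrite inE => /andP [xW xS].
rewrite -(restr_Cm C xW); apply: (IH (S :\ x)); last exact: maxi_Cm.
  move: hn; rewrite (cardsD1 x) !inE xW xS /= add1n => [[<-]].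
  by rewrite setDDl setDDl setUC.
by rewrite subsetD1 hWS xW.
Qed.

Lemma maxi_restr' S W j C : W \subset S -> maxi S j C -> maxi W j (restr C W).
Proof. exact: (maxi_restr erefl). Qed.

Lemma maxi_small S j C Y : maxi S j.+1 C -> Y \subset S -> #|Y| <= j ->
  shatters C Y.
Proof.
move=> hC hY hj; case: (maxi_restr' hY hC) => _ _ hc.
by rewrite /shatters eqEcard restr_sub hc card_powerset Psi_full ?ltnS // leqnn.
Qed.

Lemma maxi_miss S j C Y : maxi S j C -> Y \subset S -> #|Y| = j ->
  #|powerset Y :\: restr C Y| = 1.
Proof.
move=> hC hY hj; case: (maxi_restr' hY hC) => _ _ hc.
rewrite cardsD (setIidPr (restr_sub C Y)) hc card_powerset hj -Psi_nn.
by rewrite subSnn.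
Qed.

Lemma card1_eq (A : {set {set X}}) p q : #|A| = 1 -> p \in A -> q \in A -> p = q.
Proof.
move/eqP/cards1P => [a ->]; rewrite !inE => /eqP -> /eqP -> //.
Qed.

Definition cubeAt C T Y := forall Z, Z \subset Y -> T :|: Z \in C.

Lemma maxi_cube j : forall S C Y, maxi S j.+1 C -> Y \subset S -> #|Y| = j ->
  (exists T, T \subset S :\: Y /\ cubeAt C T Y) /\
  (forall T1 T2, T1 \subset S :\: Y -> T2 \subset S :\: Y ->
     cubeAt C T1 Y -> cubeAt C T2 Y -> T1 = T2).
Proof.
elim: j => [|k IH] S C Y hC hY hj.
  move/cards0_eq: hj => ->; rewrite setD0.
  case: hC => hsub _; rewrite Psi_rec Psi0 bin0 /= => /eqP/cards1P [c0 eC].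
  have Z0 : forall Z, Z \subset set0 -> Z = set0 by move=> Z; rewrite subset0 => /eqP.
  split.
    exists c0; split.
      by rewrite -powersetE; move/subsetP: hsub; apply; rewrite eC inE.
    by move=> Z /Z0 ->; rewrite setU0 eC inE.
  move=> T1 T2 _ _ h1 h2; move: (h1 set0 (sub0set _)) (h2 set0 (sub0set _)).
  by rewrite !setU0 eC !inE => /eqP -> /eqP ->.
have : 0 < #|Y| by rewrite hj.
case/card_gt0P => y yY.
have yS : y \in S by move/subsetP: hY; apply.
have hC' := maxi_Cr hC yS.
have hY' : Y :\ y \subset S :\ y by apply: setSD.
have hj' : #|Y :\ y| = k by move: hj; rewrite (cardsD1 y) yY add1n => [[]].
have eD : (S :\ y) :\: (Y :\ y) = S :\: Y.
  apply/setP=> z; rewrite !inE; case: eqP => [->|] /=; by rewrite ?yY.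
have [[T [hT hcube]] huniq] := IH _ _ _ hC' hY' hj'.
rewrite eD in hT huniq.
have toCr : forall T, T \subset S :\: Y -> cubeAt C T Y -> cubeAt (Cr C y) T (Y :\ y).
  move=> T0 hT0 hc Z hZ; rewrite inE; apply/and3P; split.
  - by apply: hc; apply: (subset_trans hZ); apply: subD1set.
  - rewrite !inE negb_or; apply/andP; split.
      apply/negP => yT; move/subsetP: hT0 => /(_ y yT); by rewrite inE yY.
    apply/negP => yZ; move/subsetP: hZ => /(_ y yZ); by rewrite !inE eqxx.
  - rewrite setUCA; apply: hc; rewrite subUset sub1set yY /=.
    by apply: (subset_trans hZ); apply: subD1set.
split.
  exists T; split => // Z hZ.
  have hZ' : Z :\ y \subset Y :\ y by apply: setSD.
  move: (hcube _ hZ'); rewrite inE => /and3P [h1 _ h3].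
  case yZ: (y \in Z).
    by move: h3; rewrite setUCA setD1K.
  by move: h1; rewrite setD1_id ?yZ.
move=> T1 T2 h1 h2 c1 c2; apply: huniq => //; exact: toCr.
Qed.

End Work2.

Section Work3.
Variable X : finType.
Implicit Types (S Y Z W T c u : {set X}) (C D : {set {set X}}).

Definition Rel S j C D c Y :=
  [/\ Y \subset S, #|Y| = j, cubeAt C (c :\: Y) Y & c :&: Y \notin restr D Y].

Lemma Rel_C S j C D c Y : Rel S j C D c Y -> c \in C.
Proof. by case=> _ _ h _; rewrite -{1}(setID c Y) setUC; apply: h; apply: subsetIr. Qed.

Lemma Rel_notD S j C D c Y : Rel S j C D c Y -> c \notin D.
Proof. by case=> _ _ _ h; apply/negP => cD; apply: (negP h); apply: imset_f. Qed.

Lemma Rel_uniq S j C D c1 c2 Y : maxi S j.+1 C -> maxi S j D ->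
  Rel S j C D c1 Y -> Rel S j C D c2 Y -> c1 = c2.
Proof.
move=> hC hD h1 h2.
have s1 := Rel_C h1; have s2 := Rel_C h2.
case: h1 h2 => hY hj k1 p1 [_ _ k2 p2].
have sub : forall c, c \in C -> c :\: Y \subset S :\: Y.
  move=> c cC; apply: setSD; rewrite -powersetE.
  by case: hC => /subsetP hs _ _; apply: hs.
have [_ hu] := maxi_cube hC hY hj.
have eT := hu _ _ (sub _ s1) (sub _ s2) k1 k2.
have eP : c1 :&: Y = c2 :&: Y.
  apply: (card1_eq (maxi_miss hD hY hj)); rewrite inE ?p1 ?p2 powersetE subsetIr //.
by rewrite -(setID c1 Y) -(setID c2 Y) eT eP.
Qed.

Lemma Rel_ex S j C D Y : maxi S j.+1 C -> maxi S j D -> Y \subset S -> #|Y| = j ->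
  exists c, Rel S j C D c Y.
Proof.
move=> hC hD hY hj.
have [[T [hT hc]] _] := maxi_cube hC hY hj.
have : 0 < #|powerset Y :\: restr D Y| by rewrite (maxi_miss hD hY hj).
case/card_gt0P => p; rewrite inE powersetE => /andP [pD pY].
have TY : forall z, z \in T -> z \notin Y.
  by move=> z /(subsetP hT); rewrite inE => /andP [].
have e1 : (T :|: p) :\: Y = T.
  apply/setP=> z; rewrite !inE; case zT: (z \in T); first by rewrite (TY _ zT).
  by case zY: (z \in Y) => //=; apply/negP => /(subsetP pY); rewrite zY.
have e2 : (T :|: p) :&: Y = p.
  apply/setP=> z; rewrite !inE; case zp: (z \in p).
    by rewrite orbT (subsetP pY).
  by rewrite orbF; case zT: (z \in T) => //=; apply/negbTE/TY.
by exists (T :|: p); split; rewrite ?e1 ?e2.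
Qed.

Lemma Rel_Cm S j C D c Y x : x \in S -> x \notin Y -> Rel S j C D c Y ->
  Rel (S :\ x) j (Cm C x) (Cm D x) (c :\ x) Y.
Proof.
move=> xS xY [hY hj hc hp]; split=> //.
- by rewrite subsetD1 hY xY.
- move=> Z hZ.
  have -> : (c :\ x) :\: Y :|: Z = ((c :\: Y) :|: Z) :\ x.
    apply/setP=> z; rewrite !inE; case: eqP => [->|] /=; last by [].
    by rewrite (negbTE xY) /=; apply/negP => /(subsetP hZ); apply/negP.
  by apply: imset_f; apply: hc.
- rewrite restr_Cm //; have -> // : (c :\ x) :&: Y = c :&: Y.
  apply/setP=> z; rewrite !inE; case: eqP => [->|] //=.
  by rewrite (negbTE xY) andbF.
Qed.

Lemma Rel_Cr S k C D c Y x : x \in Y -> Rel S k.+1 C D c Y ->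
  Rel (S :\ x) k (Cr C x) (Cr D x) (c :\ x) (Y :\ x).
Proof.
move=> xY [hY hj hc hp]; split.
- exact: setSD.
- by move: hj; rewrite (cardsD1 x) xY add1n => [[]].
- move=> Z hZ.
  have xZ : x \notin Z by apply/negP => /(subsetP hZ); rewrite !inE eqxx.
  have ZY : Z \subset Y by apply: (subset_trans hZ); apply: subD1set.
  have -> : (c :\ x) :\: (Y :\ x) :|: Z = (c :\: Y) :|: Z.
    apply/setP=> z; rewrite !inE; case: eqP => [->|] //=.
    by rewrite xY (negbTE xZ).
  rewrite inE; apply/and3P; split.
  + exact: hc.
  + by rewrite !inE xY (negbTE xZ).
  + rewrite setUCA; apply: hc; by rewrite subUset sub1set xY.
- apply/negP => /imsetP [f]; rewrite inE => /andP [fD /andP [xf xfD]] e.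
  apply: (negP hp); apply/imsetP.
  case xc: (x \in c).
    exists (x |: f) => //; apply/setP=> z; move/setP: e => /(_ z); rewrite !inE.
    case: eqP => [->|] /=; first by rewrite xc xY.
    by move=> _ ->.
  exists f => //; apply/setP=> z; move/setP: e => /(_ z); rewrite !inE.
  case: eqP => [->|] /=; first by rewrite xc (negbTE xf).
  by move=> _ ->.
Qed.

Definition flip c (x : X) := if x \in c then c :\ x else x |: c.

Lemma flipD c x : flip c x :\ x = c :\ x.
Proof.
rewrite /flip; case xc: (x \in c).
  by apply/setP=> z; rewrite !inE; case: eqP.
by rewrite setU1K ?xc // setD1_id ?xc.
Qed.

Lemma flip_neq c x : flip c x != c.
Proof.
rewrite /flip; case xc: (x \in c); apply/eqP => /setP /(_ x); rewrite !inE ?eqxx ?xc //.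
Qed.

Lemma fib u c x : u :\ x = c :\ x -> u = c \/ u = flip c x.
Proof.
move=> e; rewrite /flip.
case xu: (x \in u); case xc: (x \in c).
- by left; rewrite -(setD1K xu) e setD1K.
- by right; rewrite -(setD1K xu) e setD1_id ?xc.
- by right; rewrite -(setD1_id (negbT xu)) e.
- by left; rewrite -(setD1_id (negbT xu)) e setD1_id ?xc.
Qed.

Lemma flip_out c x Y : x \notin Y -> flip c x :&: Y = c :&: Y.
Proof.
move=> xY; apply/setP=> z; rewrite /flip; case: (x \in c); rewrite !inE;
  case: eqP => [->|] //=; by rewrite (negbTE xY) !andbF.
Qed.

Lemma flip_in c x Y : x \in Y -> flip c x :\: Y = c :\: Y.
Proof.
move=> xY; apply/setP=> z; rewrite /flip; case: (x \in c); rewrite !inE;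
  case: eqP => [->|] //=; rewrite xY /= ?andbF //.
Qed.

End Work3.

Section Work4.
Variable X : finType.
Implicit Types (S Y Z W T c u v : {set X}) (C D : {set {set X}}).

Lemma flip_sub S u x : u \subset S -> x \in S -> flip u x \subset S.
Proof.
move=> hu xS; rewrite /flip; case: (x \in u).
  by apply: (subset_trans _ hu); apply: subD1set.
by rewrite subUset sub1set xS.
Qed.

Lemma hyper_conn S (G : {set X} -> Prop) :
  (forall u x, G u -> x \in S -> G (flip u x)) ->
  forall n u v, #|u :\: v| + #|v :\: u| = n -> G u -> u \subset S -> v \subset S -> G v.
Proof.
move=> step; elim=> [|n IH] u v hn Gu uS vS.
  have e1 : #|u :\: v| = 0 by move: hn; case: #|u :\: v|.
  have e2 : #|v :\: u| = 0 by move: hn; rewrite e1.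
  move/cards0_eq/eqP: e1; rewrite setD_eq0 => h1.
  move/cards0_eq/eqP: e2; rewrite setD_eq0 => h2.
  by have -> : v = u by apply/eqP; rewrite eqEsubset h1 h2.
case: (posnP #|u :\: v|) => [e1|].
  have : 0 < #|v :\: u| by move: hn; rewrite e1 add0n => ->.
  case/card_gt0P => x; rewrite inE => /andP [xu xv].
  have xS : x \in S by apply: (subsetP vS).
  apply: (IH (flip u x)); [|exact: step|exact: flip_sub|exact: vS].
  have -> : flip u x = x |: u by rewrite /flip (negbTE xu).
  have -> : (x |: u) :\: v = u :\: v.
    apply/setP=> z; rewrite !inE; case: eqP => [->|] //=; by rewrite xv.
  move: hn; rewrite e1 (cardsD1 x (v :\: u)) !inE xu xv /= add1n => [[<-]].
  by rewrite add0n setDDl setUC.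
case/card_gt0P => x; rewrite inE => /andP [xv xu].
have xS : x \in S by apply: (subsetP uS).
apply: (IH (flip u x)); [|exact: step|exact: flip_sub|exact: vS].
have -> : flip u x = u :\ x by rewrite /flip xu.
have -> : v :\: (u :\ x) = v :\: u.
  apply/setP=> z; rewrite !inE; case: eqP => [->|] //=; by rewrite (negbTE xv) andbF.
move: hn; rewrite (cardsD1 x (u :\: v)) !inE xu xv /= add1n addSn => [[<-]].
by rewrite setDDl setDDl setUC.
Qed.

Lemma inCr C c x : c \in C -> flip c x \in C -> c :\ x \in Cr C x.
Proof.
rewrite /flip inE; case xc: (x \in c) => cC fC.
  by rewrite fC !inE eqxx /= setD1K.
have xc' : x \notin c by rewrite xc.
by rewrite setD1_id // cC xc' fC.
Qed.

Lemma notCr D c x : c \notin D -> c :\ x \notin Cr D x.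
Proof.
move=> cD; rewrite inE; apply/negP => /and3P [h1 _ h2]; apply: (negP cD).
case xc: (x \in c); first by rewrite -(setD1K xc).
by rewrite -(setD1_id (negbT xc)).
Qed.

Lemma main n : forall S j C D, #|S| = n -> maxi S j.+1 C -> maxi S j D -> D \subset C ->
  (forall c, c \in C :\: D -> exists Y, Rel S j C D c Y) /\
  (forall c Y1 Y2, Rel S j C D c Y1 -> Rel S j C D c Y2 -> Y1 = Y2).
Proof.
elim/ltn_ind: n => n IH S [|k] C D hS hC hD hDC.
  have D0 : D = set0 by case: hD => _ _; rewrite Psi0 => /cards0_eq.
  split.
    move=> c; rewrite inE => /andP [_ cC]; exists set0; split.
    - exact: sub0set.
    - exact: cards0.
    - by move=> Z; rewrite subset0 => /eqP ->; rewrite setD0 setU0.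
    - by rewrite D0 /restr imset0 inE.
  move=> c Y1 Y2 [_ h1 _ _] [_ h2 _ _].
  by rewrite (cards0_eq h1) (cards0_eq h2).
have sub_S : forall u, u \in C -> u \subset S.
  by case: hC => /subsetP hs _ _ u /hs; rewrite powersetE.
have hSx : forall x, x \in S -> #|S :\ x| < n.
  by move=> x xS; rewrite -hS (cardsD1 x S) xS.
have hFB : forall x, Cr D x \subset Cr C x.
  move=> x; apply/subsetP => u; rewrite !inE => /and3P [h1 h2 h3].
  by rewrite !(subsetP hDC) ?h2.
have IHAE : forall x, x \in S -> _ := fun x xS =>
  IH _ (hSx x xS) (S :\ x) k.+1 (Cm C x) (Cm D x) erefl (maxi_Cm hC xS)
     (maxi_Cm hD xS) (imsetS _ hDC).
have IHBF : forall x, x \in S -> _ := fun x xS =>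
  IH _ (hSx x xS) (S :\ x) k (Cr C x) (Cr D x) erefl (maxi_Cr hC xS)
     (maxi_Cr hD xS) (hFB x).
set R := Rel S k.+1 C D.
have H1 : forall x a, x \in S -> a \in Cm C x :\: Cm D x ->
    exists c1 Y1, [/\ x \notin Y1, R c1 Y1 & c1 :\ x = a].
  move=> x a xS ha; have [hex _] := IHAE x xS.
  have [Y1 r1] := hex a ha.
  have r1' := r1; case: r1' => hY1 hj1 _ _.
  have xY1 : x \notin Y1 by apply/negP => /(subsetP hY1); rewrite !inE eqxx.
  have Y1S : Y1 \subset S by apply: (subset_trans hY1); apply: subD1set.
  have [c1 rc1] := Rel_ex hC hD Y1S hj1.
  exists c1, Y1; split => //.
  exact: (Rel_uniq (maxi_Cm hC xS) (maxi_Cm hD xS) (Rel_Cm xS xY1 rc1) r1).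
have H2 : forall x a, x \in S -> a \in Cr C x :\: Cr D x ->
    exists c2 Y2, [/\ x \in Y2, R c2 Y2 & c2 :\ x = a].
  move=> x a xS ha; have [hex _] := IHBF x xS.
  have [Y0 r0] := hex a ha.
  have r0' := r0; case: r0' => hY0 hj0 _ _.
  have xY0 : x \notin Y0 by apply/negP => /(subsetP hY0); rewrite !inE eqxx.
  have Y2S : x |: Y0 \subset S.
    rewrite subUset sub1set xS /=; apply: (subset_trans hY0); apply: subD1set.
  have hj2 : #|x |: Y0| = k.+1 by rewrite cardsU1 xY0 hj0.
  have [c2 rc2] := Rel_ex hC hD Y2S hj2.
  exists c2, (x |: Y0); split => //; first by rewrite !inE eqxx.
  have := Rel_Cr (setU11 x Y0) rc2; rewrite setU1K // => r2.
  exact: (Rel_uniq (maxi_Cr hC xS) (maxi_Cr hD xS) r2 r0).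
have H3 : forall x c c' Y1 Y2, x \in S -> R c Y1 -> R c' Y2 -> c :\ x = c' :\ x ->
    (x \in Y1) = (x \in Y2) -> Y1 = Y2.
  move=> x c c' Y1 Y2 xS r1 r2 e e12.
  case xY1: (x \in Y1).
    have xY2 : x \in Y2 by rewrite -e12.
    have [_ hu] := IHBF x xS.
    have := Rel_Cr xY1 r1; rewrite e => r1'.
    have := hu _ _ _ r1' (Rel_Cr xY2 r2) => e'.
    by rewrite -(setD1K xY1) e' setD1K.
  have xY2 : x \notin Y2 by rewrite -e12 xY1.
  have [_ hu] := IHAE x xS.
  have := Rel_Cm xS (negbT xY1) r1; rewrite e => r1'.
  exact: (hu _ _ _ r1' (Rel_Cm xS xY2 r2)).
set src := fun c => exists Y, R c Y.
set coll := fun c => exists Y1 Y2, [/\ Y1 != Y2, R c Y1 & R c Y2].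
have alpha : forall c x, c \in C :\: D -> ~ src c -> x \in S -> coll (flip c x).
  move=> c x; rewrite inE => /andP [cD cC] ns xS.
  have aA : c :\ x \in Cm C x by apply: imset_f.
  have aF : c :\ x \notin Cr D x by apply: notCr.
  case aE: (c :\ x \in Cm D x).
    exfalso; case/imsetP: aE => e eD ea.
    case: (fib (esym ea)) => ee; first by move: cD; rewrite -ee eD.
    have fC : flip c x \in C by rewrite -ee (subsetP hDC).
    have aB : c :\ x \in Cr C x :\: Cr D x by rewrite inE aF inCr.
    have [c2 [Y2 [_ r2 e2]]] := H2 x _ xS aB.
    case: (fib e2) => ec2; first by apply: ns; exists Y2; rewrite -ec2.
    by move: (Rel_notD r2); rewrite ec2 -ee eD.
  have aAE : c :\ x \in Cm C x :\: Cm D x by rewrite inE aE aA.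
  have [c1 [Y1 [xY1 r1 e1]]] := H1 x _ xS aAE.
  case: (fib e1) => ec1; first by exfalso; apply: ns; exists Y1; rewrite -ec1.
  have fC : flip c x \in C by rewrite -ec1; exact: Rel_C r1.
  have aB : c :\ x \in Cr C x :\: Cr D x by rewrite inE aF inCr.
  have [c2 [Y2 [xY2 r2 e2]]] := H2 x _ xS aB.
  case: (fib e2) => ec2; first by exfalso; apply: ns; exists Y2; rewrite -ec2.
  exists Y1, Y2; split.
  - by apply/eqP => eY; move: xY1; rewrite eY xY2.
  - by rewrite -ec1.
  - by rewrite -ec2.
have beta0 : forall c x (Yi Yo : {set X}), x \in S -> x \in Yi -> x \notin Yo -> R c Yi -> R c Yo ->
    flip c x \in C :\: D /\ ~ src (flip c x).
  move=> c x Yi Yo xS xi xo ri ro.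
  have uC : flip c x \in C.
    case: ri => _ _ hc _.
    rewrite -[flip c x](setID _ Yi) setUC (flip_in c xi).
    by apply: hc; apply: subsetIr.
  have unD : flip c x \notin D.
    case: ro => _ _ _ hp; apply/negP => uD; apply: (negP hp).
    by rewrite -(flip_out c xo); apply: imset_f.
  split; first by rewrite inE uC unD.
  move=> [Y3 r3].
  case x3: (x \in Y3).
    have eY := H3 x _ _ _ _ xS r3 ri (flipD c x) (etrans x3 (esym xi)).
    subst Y3; have := Rel_uniq hC hD r3 ri => e.
    by move: (flip_neq c x); rewrite e eqxx.
  have eY := H3 x _ _ _ _ xS r3 ro (flipD c x) (etrans x3 (esym (negbTE xo))).
  subst Y3; have := Rel_uniq hC hD r3 ro => e.
  by move: (flip_neq c x); rewrite e eqxx.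
have beta : forall c x, coll c -> x \in S -> flip c x \in C :\: D /\ ~ src (flip c x).
  move=> c x [Y1 [Y2 [ne r1 r2]]] xS.
  case x1: (x \in Y1); case x2: (x \in Y2).
  - by move: ne; rewrite (H3 x _ _ _ _ xS r1 r2 erefl (etrans x1 (esym x2))) eqxx.
  - exact: (beta0 _ _ _ _ xS x1 (negbT x2) r1 r2).
  - exact: (beta0 _ _ _ _ xS x2 (negbT x1) r2 r1).
  - by move: ne; rewrite (H3 x _ _ _ _ xS r1 r2 erefl (etrans x1 (esym x2))) eqxx.
set G := fun u => (u \in C :\: D /\ ~ src u) \/ coll u.
have GCD : forall u, G u -> u \in C :\: D.
  move=> u [[hu _] // | [Y1 [Y2 [_ r1 _]]]].
  by rewrite inE (Rel_notD r1) (Rel_C r1).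
have Gstep : forall u x, G u -> x \in S -> G (flip u x).
  move=> u x [[hu ns]|hc] xS; first by right; apply: alpha.
  by left; apply: beta.
have noG : forall u, ~ G u.
  move=> u Gu.
  have : 0 < #|D| by case: hD => _ _ ->; apply: Psi_pos.
  case/card_gt0P => d0 d0D.
  have d0S : d0 \subset S.
    by case: hD => /subsetP hs _ _; move: (hs d0 d0D); rewrite powersetE.
  have uS : u \subset S by apply: sub_S; move: (GCD u Gu); rewrite inE => /andP [].
  have := GCD _ (hyper_conn Gstep erefl Gu uS d0S).
  by rewrite inE d0D.
split.
  move=> c hc; case: (classic (src c)) => // ns.
  by exfalso; apply: (noG c); left.
move=> c Y1 Y2 r1 r2; case: (eqVneq Y1 Y2) => // ne.
by exfalso; apply: (noG c); right; exists Y1, Y2.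
Qed.

End Work4.

Section Work5.
Variable X : finType.
Implicit Types (S Y Z W T c u v : {set X}) (C D : {set {set X}}).

Lemma cubeD T Y Z : [disjoint T & Y] -> Z \subset Y -> (T :|: Z) :\: Y = T.
Proof.
rewrite disjoints_subset => /subsetP hT /subsetP hZ; apply/setP=> z; rewrite !inE.
case zT: (z \in T); first by move: (hT z zT); rewrite inE => ->.
by rewrite /=; case zY: (z \in Y) => //=; apply/negP => /hZ; rewrite zY.
Qed.

Lemma cubeI T Y Z : [disjoint T & Y] -> Z \subset Y -> (T :|: Z) :&: Y = Z.
Proof.
rewrite disjoints_subset => /subsetP hT /subsetP hZ; apply/setP=> z; rewrite !inE.
case zZ: (z \in Z); first by rewrite orbT (hZ z zZ).
by rewrite orbF; case zT: (z \in T) => //=; move: (hT z zT); rewrite inE => /negbTE.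
Qed.

Lemma disjD c Y : [disjoint c :\: Y & Y].
Proof. by rewrite disjoints_subset; apply/subsetP=> z; rewrite !inE => /andP []. Qed.

Lemma Rel_restr S j C D c Y W : Y \subset W -> Rel S j C D c Y ->
  Rel W j (restr C W) (restr D W) (c :&: W) Y.
Proof.
move=> YW [hY hj hc hp]; split => //.
- move=> Z hZ.
  have -> : (c :&: W) :\: Y :|: Z = ((c :\: Y) :|: Z) :&: W.
    apply/setP=> z; rewrite !inE; case zZ: (z \in Z).
      by rewrite !orbT (subsetP YW) // (subsetP hZ).
    by rewrite !orbF; case: (z \in c); case: (z \in W); case: (z \in Y).
  by apply: imset_f; apply: hc.
- rewrite restr_restr //; have -> // : c :&: W :&: Y = c :&: Y.
  by rewrite -setIA (setIidPr YW).
Qed.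

Lemma clash_aux c c' Y W : Y \subset W -> c :&: W = c' :&: W -> c :&: Y = c' :&: Y.
Proof. by move=> YW e; rewrite -(setIidPr YW) !setIA e. Qed.

End Work5.

Theorem proposition5p2 (X : finType) (d : nat) (C D : {set {set X}}) :
  maximum C d.+1 -> maximum D d -> D \subset C ->
  (forall c, c \in C :\: D ->
     exists! Q : {set {set X}}, exists Y : {set X},
       incomplete_cube C D Q Y /\ is_source D Q Y c) /\
  (forall r' r : {set X} -> {set X},
     repr_map D r' ->
     {in D, forall c, r c = r' c} ->
     (forall c, c \in C :\: D ->
        exists Q : {set {set X}}, incomplete_cube C D Q (r c) /\ is_source D Q (r c) c) ->
     repr_map C r).
Proof.
move=> [[_ vC] cardC] [[_ vD] cardD] hDC.
set S := [set: X].
have hC : maxi S d.+2 C.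
  split; first by apply/subsetP => c _; rewrite powersetE subsetT.
    by move=> Y /vC; rewrite ltnS.
  by rewrite cardsT cardC.
have hD : maxi S d.+1 D.
  split; first by apply/subsetP => c _; rewrite powersetE subsetT.
    by move=> Y /vD; rewrite ltnS.
  by rewrite cardsT cardD.
have [mex muniq] := main erefl hC hD hDC.
have missed : forall Y, (Y \in shattered_family C :\: shattered_family D) = (#|Y| == d.+1).
  move=> Y; rewrite !inE; apply/andP/eqP.
    case=> nD sC; apply/eqP; rewrite eqn_leq vC //=.
    rewrite ltnNge; apply/negP => hY; apply: (negP nD).
    exact: (maxi_small hD (subsetT Y) hY).
  move=> hY; split.
    by apply/negP => /vD; rewrite hY ltnn.
  by apply: (maxi_small hC (subsetT Y)); rewrite hY.
set R := Rel S d.+1 C D.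
pose cube := fun c Y : {set X} => [set (c :\: Y) :|: Z | Z in powerset Y].
have IC_Rel : forall c Q Y, incomplete_cube C D Q Y -> is_source D Q Y c ->
    R c Y /\ Q = cube c Y.
  move=> c Q Y [[T [dT eQ]] QC hm] [cQ cp _].
  have [Z0 Z0Y eC] : exists2 Z0 : {set X}, Z0 \subset Y & c = T :|: Z0.
    by move: cQ; rewrite eQ => /imsetP [Z0]; rewrite powersetE => ? ->; exists Z0.
  have eT : c :\: Y = T by rewrite eC cubeD.
  split; last by rewrite /cube eT.
  split => //; first exact: subsetT.
    by apply/eqP; rewrite -missed.
  by move=> Z hZ; apply: (subsetP QC); rewrite eQ eT; apply: imset_f; rewrite powersetE.
have Rel_IC : forall c Y, R c Y -> incomplete_cube C D (cube c Y) Y /\ is_source D (cube c Y) Y c.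
  move=> c Y r; have r' := r; case: r' => _ hj hc hp.
  split; split.
  - by exists (c :\: Y); split => //; apply: disjD.
  - by apply/subsetP=> u /imsetP [Z]; rewrite powersetE => hZ ->; apply: hc.
  - by rewrite missed hj.
  - by apply/imsetP; exists (c :&: Y); rewrite ?powersetE ?subsetIr // setUC setID.
  - exact: hp.
  - move=> c' /imsetP [Z]; rewrite powersetE => hZ -> hZp.
    rewrite cubeI ?disjD // in hZp.
    have eZ : Z = c :&: Y.
      apply: (card1_eq (maxi_miss hD (subsetT Y) hj)); rewrite inE ?hZp ?hp powersetE ?subsetIr //.
    by rewrite eZ setUC setID.
split.
  move=> c hc; have [Y r] := mex c hc.
  exists (cube c Y); split; first by exists Y; apply: Rel_IC.
  move=> Q [Y' [h1 h2]]; have [r' ->] := IC_Rel _ _ _ h1 h2.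
  by rewrite (muniq _ _ _ r r').
move=> r' r [r1 r2 r3 r4] agree hsrc.
have XDC : forall Y, Y \in shattered_family D -> Y \in shattered_family C.
  move=> Y; rewrite !inE !shattersP => h; apply: (subset_trans h); exact: imsetS.
have RC : forall c, c \in C :\: D -> R c (r c).
  by move=> c hc; have [Q [h1 h2]] := hsrc c hc; case: (IC_Rel _ _ _ h1 h2).
have notXD : forall c, c \in C :\: D -> r c \notin shattered_family D.
  move=> c hc; case: (RC c hc) => _ hj _ _; rewrite inE; apply/negP => /vD.
  by rewrite hj ltnn.
have CD : forall c, c \in C -> c \notin D -> c \in C :\: D by move=> c ? ?; rewrite inE; apply/andP.
split.
- move=> c cC; case cD: (c \in D); first by rewrite agree // XDC // r1.
  have := hsrc c (CD c cC (negbT cD)) => [[Q [[_ _ hm] _]]].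
  by move: hm; rewrite inE => /andP [].
- move=> c1 c2 c1C c2C e.
  case d1: (c1 \in D); case d2: (c2 \in D).
  + by apply: r2; rewrite // -!agree.
  + by move: (notXD c2 (CD _ c2C (negbT d2))); rewrite -e agree // r1.
  + by move: (notXD c1 (CD _ c1C (negbT d1))); rewrite e agree // r1.
  + have h1 := RC _ (CD _ c1C (negbT d1)); have h2 := RC _ (CD _ c2C (negbT d2)).
    by rewrite e in h1; apply: (Rel_uniq hC hD h1 h2).
- move=> Y hY; case YD: (Y \in shattered_family D).
    by have [c cD <-] := r3 Y YD; exists c; rewrite ?agree // (subsetP hDC).
  have hj : #|Y| = d.+1 by apply/eqP; rewrite -missed inE YD hY.
  have [c rc] := Rel_ex hC hD (subsetT Y) hj.
  have hc : c \in C :\: D by rewrite inE (Rel_notD rc) (Rel_C rc).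
  by exists c; rewrite ?(Rel_C rc) // (muniq _ _ _ (RC c hc) rc).
- move=> c c' cC c'C ne; apply/negP => /eqP e.
  set W := r c :|: r c' in e.
  have YW1 : r c \subset W by apply: subsetUl.
  have YW2 : r c' \subset W by apply: subsetUr.
  case d1: (c \in D); case d2: (c' \in D).
  + by move/eqP: (r4 c c' d1 d2 ne); rewrite -!agree.
  + case: (RC c' (CD _ c'C (negbT d2))) => _ _ _ hp.
    by apply: (negP hp); rewrite -(clash_aux YW2 e); apply: imset_f.
  + case: (RC c (CD _ cC (negbT d1))) => _ _ _ hp.
    by apply: (negP hp); rewrite (clash_aux YW1 e); apply: imset_f.
  + have h1 := RC _ (CD _ cC (negbT d1)); have h2 := RC _ (CD _ c'C (negbT d2)).
    case: (eqVneq (r c) (r c')) => er.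
      by rewrite er in h1; move: ne; rewrite (Rel_uniq hC hD h1 h2) eqxx.
    have WS : W \subset S by apply: subsetT.
    have hCW := maxi_restr' WS hC; have hDW := maxi_restr' WS hD.
    have [_ mu] := main erefl hCW hDW (imsetS _ hDC).
    have g1 := Rel_restr YW1 h1; have g2 := Rel_restr YW2 h2.
    rewrite -e in g2.
    by move: er; rewrite (mu _ _ _ g1 g2) eqxx.
Qed.
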